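(* Let $\mathcal{B}=\bigcup_{s>0}\mathcal{B}_s$, where $\mathcal{B}_s$ is the set of irrational real numbers satisfying the one-dimensional Bruno-$s$ condition. Then $\mathcal{B}$ is invariant under the action of $PSL(2,\mathbb{Z})$: for all integers $a,b,c,d$ with $ad-bc=1$ and all $\omega\in\mathcal{B}$, $(a\omega+b)/(c\omega+d)\in\mathcal{B}$.
   Context: For an irrational real $\omega$, let $(q_j)_{j\ge0}$ be the denominators of the continued fraction convergents of $\omega$ (equivalently of its fractional part): $q_{-1}=0$, $q_0=1$, $q_{k+1}=a_{k+1}q_k+q_{k-1}$ with $(a_k)$ the partial quotients. $\omega$ satisfies the one-dimensional Bruno-$s$ condition ($s>0$) if $\limsup_{N\to+\infty}\big(\sum_{j=0}^{k(N)}\frac{\log q_{j+1}}{q_j}-s\log N\big)<+\infty$, where $k(N)$ is defined by $q_{k(N)}\le N<q_{k(N)+1}$. *)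

(* Defs.v *)
From Stdlib Require Import Reals Lra Lia ZArith.
Open Scope R_scope.

Definition irrational (w : R) : Prop :=
  ~ exists p q : Z, q <> 0%Z /\ w = IZR p / IZR q.

(* Gauss-map iterates: x_0 = {w}, x_{k+1} = {1/x_k}; so that
   w = a_0 + x_0 and x_k = 1/(a_{k+1} + x_{k+1}). *)
Fixpoint cf_rem (w : R) (k : nat) : R :=
  match k with
  | O => frac_part w
  | S k' => frac_part (/ cf_rem w k')
  end.

(* partial quotients a_{k+1} = floor (1 / x_k)  (k >= 0) *)
Definition cf_a (w : R) (k : nat) : Z :=
  match k with
  | O => Int_part w
  | S k' => Int_part (/ cf_rem w k')
  end.

(* (q_{k-1}, q_k), with q_{-1} = 0, q_0 = 1, q_{k+1} = a_{k+1} q_k + q_{k-1} *)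
Fixpoint cf_qpair (w : R) (k : nat) : Z * Z :=
  match k with
  | O => (0%Z, 1%Z)
  | S k' => let (qm, qk) := cf_qpair w k' in (qk, (cf_a w (S k') * qk + qm)%Z)
  end.

Definition cf_q (w : R) (k : nat) : Z := snd (cf_qpair w k).

Definition bruno_sum (w : R) (k : nat) : R :=
  sum_f_R0 (fun j => ln (IZR (cf_q w (S j))) / IZR (cf_q w j)) k.

(* one-dimensional Bruno-s condition:
   limsup_{N -> oo} ( bruno_sum w (k(N)) - s log N ) < +oo,
   where k(N) is the index with q_{k(N)} <= N < q_{k(N)+1}. *)
Definition bruno_cond (s : R) (w : R) : Prop :=
  exists (C : R) (N0 : nat), forall (N k : nat), (N0 <= N)%nat ->
    IZR (cf_q w k) <= INR N < IZR (cf_q w (S k)) ->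
    bruno_sum w k - s * ln (INR N) <= C.

Definition in_Bs (s w : R) : Prop := irrational w /\ bruno_cond s w.
Definition in_B (w : R) : Prop := exists s, 0 < s /\ in_Bs s w.

(* Main.v *)
Require Import Defs.
From Stdlib Require Import Reals Lra Lia ZArith.
Open Scope R_scope.

Lemma my_ln_le x y : 0 < x -> x <= y -> ln x <= ln y.
Proof. intros Hx Hxy. destruct (Rle_lt_or_eq_dec _ _ Hxy) as [H|H].
 - left; apply ln_increasing; auto.
 - subst; lra. Qed.

Lemma ln_ge0 x : 1 <= x -> 0 <= ln x.
Proof. intros; rewrite <- ln_1; apply my_ln_le; lra. Qed.

Lemma Int_part_char r n : IZR n <= r < IZR n + 1 -> Int_part r = n.
Proof. intros [H1 H2]. unfold Int_part.
 assert (up r = (n+1)%Z). { symmetry; apply tech_up; rewrite plus_IZR; simpl; lra. }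
 rewrite H; lia. Qed.

Lemma frac_char r n : IZR n <= r < IZR n + 1 -> frac_part r = r - IZR n.
Proof. intros H; unfold frac_part; rewrite (Int_part_char r n H); auto. Qed.

Lemma Int_bounds r : IZR (Int_part r) <= r < IZR (Int_part r) + 1.
Proof. destruct (base_Int_part r); lra. Qed.

Lemma frac_shift x n : frac_part (x + IZR n) = frac_part x.
Proof. destruct (Int_bounds x).
 rewrite (frac_char (x + IZR n) (Int_part x + n)).
 - unfold frac_part; rewrite plus_IZR; ring.
 - rewrite plus_IZR; lra. Qed.

Lemma irr_neq0 x : irrational x -> x <> 0.
Proof. intros H E; apply H; exists 0%Z, 1%Z; split; [lia|]. rewrite E; simpl; field. Qed.

Lemma irr_add x n : irrational x -> irrational (x + IZR n).
Proof. intros H [p [q [Hq E]]]. apply H. exists (p - n*q)%Z, q; split; auto.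
 rewrite minus_IZR, mult_IZR. apply not_0_IZR in Hq.
 apply (Rplus_eq_compat_r (- IZR n)) in E. replace x with (x + IZR n + - IZR n) by ring.
 rewrite E. field; auto. Qed.

Lemma irr_opp x : irrational x -> irrational (- x).
Proof. intros H [p [q [Hq E]]]. apply H. exists (-p)%Z, q; split; auto.
 rewrite opp_IZR. apply not_0_IZR in Hq. replace x with (- - x) by ring. rewrite E. field; auto. Qed.

Lemma irr_inv x : irrational x -> irrational (/ x).
Proof. intros H [p [q [Hq E]]]. assert (Hx := irr_neq0 x H).
 assert (Hp : IZR p <> 0). { intro Hp. rewrite Hp in E. unfold Rdiv in E. rewrite Rmult_0_l in E.
   apply (Rinv_neq_0_compat x Hx); auto. }
 apply H. exists q, p; split. { intro; subst; apply Hp; auto. }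
 apply not_0_IZR in Hq. replace x with (/ / x) by (apply Rinv_inv). rewrite E. field; auto. Qed.

Lemma irr_frac x : irrational x -> irrational (frac_part x).
Proof. intros H. unfold frac_part. unfold Rminus. rewrite <- opp_IZR. apply irr_add; auto. Qed.

Lemma frac_irr_bounds x : irrational x -> 0 < frac_part x < 1.
Proof. intros H. destruct (Int_bounds x). unfold frac_part. split; [|lra].
 destruct (Rle_lt_or_eq_dec _ _ H0) as [h|h]; [lra|].
 exfalso; apply H; exists (Int_part x), 1%Z; split; [lia|]. simpl; rewrite h; field. Qed.

Lemma cf_rem_props w k : irrational w -> irrational (cf_rem w k) /\ 0 < cf_rem w k < 1.
Proof. intros H. induction k as [|k IH]; simpl.
 - split; [apply irr_frac; auto| apply frac_irr_bounds; auto].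
 - destruct IH as [I _]. split; [apply irr_frac, irr_inv; auto| apply frac_irr_bounds, irr_inv; auto]. Qed.

Lemma cf_a_ge1 w k : irrational w -> (1 <= cf_a w (S k))%Z.
Proof. intros H. simpl. destruct (cf_rem_props w k H) as [_ [h1 h2]].
 assert (1 < / cf_rem w k). { rewrite <- Rinv_1. apply Rinv_lt_contravar; lra. }
 destruct (Int_bounds (/ cf_rem w k)).
 assert (0 < Int_part (/ cf_rem w k))%Z by (apply lt_0_IZR; lra). lia. Qed.

Lemma qpair_S w k : cf_qpair w (S k) = (cf_q w k, (cf_a w (S k) * cf_q w k + fst (cf_qpair w k))%Z).
Proof. unfold cf_q; simpl. destruct (cf_qpair w k); reflexivity. Qed.

Lemma q_S w k : cf_q w (S k) = (cf_a w (S k) * cf_q w k + fst (cf_qpair w k))%Z.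
Proof. unfold cf_q at 1; rewrite qpair_S; reflexivity. Qed.

Lemma q_SS w k : cf_q w (S (S k)) = (cf_a w (S (S k)) * cf_q w (S k) + cf_q w k)%Z.
Proof. rewrite q_S, qpair_S; reflexivity. Qed.

Lemma q_0 w : cf_q w 0 = 1%Z.
Proof. reflexivity. Qed.

Lemma q_1 w : cf_q w 1 = cf_a w 1.
Proof. rewrite q_S, q_0; change (fst (cf_qpair w 0)) with 0%Z; lia. Qed.

Lemma q_inv w k : irrational w ->
  (0 <= fst (cf_qpair w k) <= cf_q w k /\ 1 <= cf_q w k)%Z.
Proof. intros H. induction k as [|k IH].
 - simpl; unfold cf_q; simpl; lia.
 - rewrite q_S. rewrite qpair_S; cbn [fst]. assert (h := cf_a_ge1 w k H). nia. Qed.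

Lemma q_ge1 w k : irrational w -> (1 <= cf_q w k)%Z.
Proof. intros H; apply (q_inv w k H). Qed.

Lemma q_mono1 w k : irrational w -> (cf_q w k <= cf_q w (S k))%Z.
Proof. intros H. rewrite q_S. assert (h := cf_a_ge1 w k H). assert (h2 := q_inv w k H). nia. Qed.

Lemma q_fib w k : irrational w -> (cf_q w (S k) + cf_q w k <= cf_q w (S (S k)))%Z.
Proof. intros H. rewrite q_SS. assert (h := cf_a_ge1 w (S k) H). assert (h2 := q_ge1 w (S k) H). nia. Qed.

Lemma q_strict w k : irrational w -> (cf_q w (S k) < cf_q w (S (S k)))%Z.
Proof. intros H. assert (h := q_fib w k H). assert (h2 := q_ge1 w k H). lia. Qed.

Lemma q_ge_k w k : irrational w -> (Z.of_nat k <= cf_q w k)%Z.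
Proof. intros H. assert (forall k, Z.of_nat k <= cf_q w k /\ Z.of_nat (S k) <= cf_q w (S k))%Z.
 { induction k0 as [|k0 IH].
   - rewrite q_0, q_1. assert (h := cf_a_ge1 w 0 H). change (Z.of_nat 0) with 0%Z; change (Z.of_nat 1) with 1%Z; lia.
   - split; [apply IH|]. assert (h := q_fib w k0 H). assert (h2 := q_ge1 w k0 H). lia. }
 apply H0. Qed.

Lemma q_mono w j k : irrational w -> (j <= k)%nat -> (cf_q w j <= cf_q w k)%Z.
Proof. intros H Hjk. induction Hjk; [lia|]. assert (h := q_mono1 w m H). lia. Qed.

Definition Q w k := IZR (cf_q w k).

Lemma Q_ge1 w k : irrational w -> 1 <= Q w k.
Proof. intros H; unfold Q; apply IZR_le; apply q_ge1; auto. Qed.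

Lemma recip_inv w n : irrational w ->
  sum_f_R0 (fun j => / Q w j) n + 2 / Q w n + 2 / Q w (S n) <= 5.
Proof. intros H. induction n as [|n IH].
 - simpl. unfold Q at 1 2; rewrite q_0. assert (h := Q_ge1 w 1 H).
   assert (/ Q w 1 <= 1). { rewrite <- Rinv_1; apply Rinv_le_contravar; lra. }
   simpl. unfold Rdiv. lra.
 - simpl. 
   assert (hx := Q_ge1 w n H). assert (hy : Q w n <= Q w (S n)) by (unfold Q; apply IZR_le, q_mono1; auto).
   assert (hz : Q w (S n) + Q w n <= Q w (S (S n))) by (unfold Q; rewrite <- plus_IZR; apply IZR_le, q_fib; auto).
   set (x := Q w n) in *. set (y := Q w (S n)) in *. set (z := Q w (S (S n))) in *.
   assert (/ y + 2 / z <= 2 / x).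
   { assert (2 / z <= 2 / (x + y)). { unfold Rdiv; apply Rmult_le_compat_l; [lra|]. apply Rinv_le_contravar; lra. }
     assert (/ y + 2 / (x + y) <= 2 / x).
     { apply Rmult_le_reg_r with (x * y * (x + y)). { apply Rmult_lt_0_compat; [apply Rmult_lt_0_compat|]; lra. }
       rewrite Rmult_plus_distr_r. replace (/ y * (x * y * (x + y))) with (x * (x + y)) by (field; lra).
       replace (2 / (x + y) * (x * y * (x + y))) with (2 * x * y) by (field; lra).
       replace (2 / x * (x * y * (x + y))) with (2 * y * (x + y)) by (field; lra). nra. }
     lra. }
   lra. Qed.

Lemma recip_sum w n : irrational w -> sum_f_R0 (fun j => / Q w j) n <= 5.
Proof. intros H. assert (h := recip_inv w n H).
 assert (0 <= 2 / Q w n). { unfold Rdiv; apply Rmult_le_pos; [lra|]. left; apply Rinv_0_lt_compat. assert (h1 := Q_ge1 w n H); lra. }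
 assert (0 <= 2 / Q w (S n)). { unfold Rdiv; apply Rmult_le_pos; [lra|]. left; apply Rinv_0_lt_compat. assert (h1 := Q_ge1 w (S n) H); lra. }
 lra. Qed.

Definition term w j := ln (Q w (S j)) / Q w j.

Lemma bruno_sum_eq w k : bruno_sum w k = sum_f_R0 (term w) k.
Proof. reflexivity. Qed.

Lemma term_nonneg w j : irrational w -> 0 <= term w j.
Proof. intros H. unfold term, Rdiv. apply Rmult_le_pos.
 - apply ln_ge0, Q_ge1; auto.
 - left; apply Rinv_0_lt_compat. assert (h := Q_ge1 w j H); lra. Qed.

Lemma term_le_sum w K k : irrational w -> (k <= K)%nat -> term w k <= sum_f_R0 (term w) K.
Proof. intros H. induction K as [|K IH]; intros Hk.
 - assert (k = 0)%nat by lia; subst; simpl; lra.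
 - simpl. assert (h := term_nonneg w (S K) H). inversion Hk.
   + subst. assert (0 <= sum_f_R0 (term w) K) by (apply cond_pos_sum; intros; apply term_nonneg; auto). lra.
   + assert (h2 := IH H1). lra. Qed.

Definition G w := exists s C K, 0 <= s /\ 0 <= C /\
  forall k, (K <= k)%nat -> ln (Q w (S k)) <= Q w k * (s * ln (Q w k) + C).

Lemma bruno_G s w : irrational w -> 0 <= s -> bruno_cond s w -> G w.
Proof. intros H Hs [C [N0 HB]]. exists s, (Rmax C 0), (S N0). split; [auto|]. split; [apply Rmax_r|].
 intros k Hk. destruct k as [|k]; [lia|].
 set (N := Z.to_nat (cf_q w (S k))).
 assert (HN : INR N = Q w (S k)). { unfold N, Q; rewrite INR_IZR_INZ, Z2Nat.id; auto. assert (h := q_ge1 w (S k) H); lia. }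
 assert (HN0 : (N0 <= N)%nat). { unfold N. assert (h := q_ge_k w (S k) H). lia. }
 assert (Hlt : IZR (cf_q w (S k)) <= INR N < IZR (cf_q w (S (S k)))).
 { rewrite HN; unfold Q; split; [lra|]. apply IZR_lt, q_strict; auto. }
 specialize (HB N (S k) HN0 Hlt). rewrite HN in HB. rewrite bruno_sum_eq in HB.
 simpl in HB. assert (0 <= sum_f_R0 (term w) k) by (apply cond_pos_sum; intros; apply term_nonneg; auto).
 assert (Ht : term w (S k) <= s * ln (Q w (S k)) + Rmax C 0).
 { assert (C <= Rmax C 0) by apply Rmax_l. lra. }
 unfold term in Ht. assert (hq := Q_ge1 w (S k) H).
 replace (ln (Q w (S (S k)))) with (Q w (S k) * (ln (Q w (S (S k))) / Q w (S k))) by (field; lra).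
 apply Rmult_le_compat_l; lra. Qed.

Lemma G_bruno w : irrational w -> G w -> exists s, 0 < s /\ bruno_cond s w.
Proof. intros H [s [C [K [Hs [HC HG]]]]]. exists (s + 5). split; [lra|].
 exists (C + sum_f_R0 (term w) K), 0%nat. intros N k _ [H1 H2].
 rewrite bruno_sum_eq. fold (Q w k) in H1. fold (Q w (S k)) in H2.
 assert (hk := Q_ge1 w k H).
 assert (lnN : 0 <= ln (INR N)) by (apply ln_ge0; lra).
 assert (Hlast : term w k <= s * ln (INR N) + C + sum_f_R0 (term w) K).
 { assert (0 <= sum_f_R0 (term w) K) by (apply cond_pos_sum; intros; apply term_nonneg; auto).
   assert (ln (Q w k) <= ln (INR N)) by (apply my_ln_le; lra).
   destruct (le_lt_dec K k) as [hK|hK].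
   - assert (h := HG k hK). assert (term w k <= s * ln (Q w k) + C).
     { unfold term. apply Rmult_le_reg_l with (Q w k); [lra|].
       replace (Q w k * (ln (Q w (S k)) / Q w k)) with (ln (Q w (S k))) by (field; lra). lra. }
     assert (s * ln (Q w k) <= s * ln (INR N)) by (apply Rmult_le_compat_l; lra). lra.
   - assert (h := term_le_sum w K k H ltac:(lia)). assert (0 <= s * ln (INR N)) by (apply Rmult_le_pos; lra). lra. }
 destruct k as [|k].
 - simpl. lra.
 - simpl. 
   assert (Hs1 : sum_f_R0 (term w) k <= sum_f_R0 (fun j => / Q w j * ln (INR N)) k).
   { apply sum_Rle. intros j Hj. unfold term. rewrite Rmult_comm. unfold Rdiv.
     apply Rmult_le_compat_r. { left; apply Rinv_0_lt_compat. assert (h := Q_ge1 w j H); lra. }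
     apply my_ln_le. { assert (h := Q_ge1 w (S j) H); lra. }
     assert (Q w (S j) <= Q w (S k)) by (unfold Q; apply IZR_le, q_mono; auto; lia). lra. }
   rewrite <- scal_sum in Hs1. assert (h5 := recip_sum w k H).
   assert (ln (INR N) * sum_f_R0 (fun j => / Q w j) k <= ln (INR N) * 5) by (apply Rmult_le_compat_l; lra).
   lra. Qed.

Lemma rem_shift w w' i j : cf_rem w i = cf_rem w' j -> forall t, cf_rem w (i+t) = cf_rem w' (j+t).
Proof. intros E t. induction t as [|t IH].
 - rewrite !Nat.add_0_r; auto.
 - rewrite !Nat.add_succ_r. simpl. rewrite IH; auto. Qed.

Lemma q_compare w w' i j : irrational w -> irrational w' -> cf_rem w i = cf_rem w' j ->
  forall t, (cf_q w' (j+t) <= (cf_q w' j * cf_q w' (S j)) * cf_q w (i+t))%Z.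
Proof. intros H H' E. set (M := (cf_q w' j * cf_q w' (S j))%Z).
 assert (forall t, cf_q w' (j+t) <= M * cf_q w (i+t) /\ cf_q w' (S (j+t)) <= M * cf_q w (S (i+t)))%Z.
 { induction t as [|t [IH1 IH2]].
   - rewrite !Nat.add_0_r. unfold M. assert (h1 := q_ge1 w' j H'). assert (h2 := q_ge1 w' (S j) H').
     assert (h3 := q_ge1 w i H). assert (h4 := q_ge1 w (S i) H).
     assert (1 <= cf_q w' (S j) * cf_q w i)%Z by nia. assert (1 <= cf_q w' j * cf_q w (S i))%Z by nia. split; nia.
   - rewrite !Nat.add_succ_r. split; auto. rewrite !q_SS.
     assert (Ea : cf_a w' (S (S (j + t))) = cf_a w (S (S (i + t)))).
     { change (Int_part (/ cf_rem w' (S (j+t))) = Int_part (/ cf_rem w (S (i+t)))).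
       rewrite <- !Nat.add_succ_r. rewrite (rem_shift w w' i j E (S t)). reflexivity. }
     rewrite Ea. assert (h := cf_a_ge1 w (S (i+t)) H). nia. }
 intros t; apply H0. Qed.

Definition Etail w w' := exists i j, cf_rem w i = cf_rem w' j.

Lemma Q_compare w w' : irrational w -> irrational w' -> Etail w w' ->
  exists i j M, 1 <= M /\ forall t, Q w' (j+t) <= M * Q w (i+t) /\ Q w (i+t) <= M * Q w' (j+t).
Proof. intros H H' [i [j E]].
 set (M1 := (cf_q w' j * cf_q w' (S j))%Z). set (M2 := (cf_q w i * cf_q w (S i))%Z).
 assert (h1 := q_compare w w' i j H H' E). assert (h2 := q_compare w' w j i H' H (eq_sym E)).
 fold M1 in h1; fold M2 in h2.
 assert (1 <= M1)%Z by (unfold M1; assert (a := q_ge1 w' j H'); assert (b := q_ge1 w' (S j) H'); nia).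
 assert (1 <= M2)%Z by (unfold M2; assert (a := q_ge1 w i H); assert (b := q_ge1 w (S i) H); nia).
 exists i, j, (IZR (M1 * M2)). split. { apply IZR_le; nia. }
 intros t. unfold Q. rewrite <- !mult_IZR. split; apply IZR_le.
 - assert (h := h1 t). assert (a := q_ge1 w (i+t) H). nia.
 - assert (h := h2 t). assert (a := q_ge1 w' (j+t) H'). nia. Qed.

Lemma G_transfer w w' : irrational w -> irrational w' -> Etail w w' -> G w -> G w'.
Proof. intros H H' Et [s [C [K [Hs [HC HG]]]]].
 destruct (Q_compare w w' H H' Et) as [i [j [M [HM HQ]]]].
 assert (lM : 0 <= ln M) by (apply ln_ge0; auto).
 exists (M * s), (ln M + M * s * ln M + M * C), (j + K)%nat.
 split; [nra|]. split. { assert (0 <= M * s * ln M) by (apply Rmult_le_pos; nra). nra. }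
 intros k Hk. set (t := (k - j)%nat). replace k with (j + t)%nat by (unfold t; lia).
 assert (HtK : (K <= i + t)%nat) by (unfold t; lia).
 assert (A1 := HG (i+t)%nat HtK).
 destruct (HQ (S t)) as [B1 _]. rewrite !Nat.add_succ_r in B1.
 destruct (HQ t) as [_ B2].
 set (x := Q w (i+t)) in *. set (y := Q w' (j+t)) in *.
 assert (hx : 1 <= x) by (apply Q_ge1; auto). assert (hy : 1 <= y) by (apply Q_ge1; auto).
 assert (hx1 : 1 <= Q w (S (i+t))) by (apply Q_ge1; auto).
 assert (L1 : ln (Q w' (S (j+t))) <= ln M + ln (Q w (S (i+t)))).
 { rewrite <- ln_mult by lra. apply my_ln_le; [assert (h := Q_ge1 w' (S (j+t)) H'); lra | auto]. }
 assert (L2 : ln x <= ln M + ln y). { rewrite <- ln_mult by lra. apply my_ln_le; lra. }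
 assert (lx : 0 <= ln x) by (apply ln_ge0; auto). assert (ly : 0 <= ln y) by (apply ln_ge0; auto).
 assert (L3 : x * (s * ln x + C) <= (M * y) * (s * (ln M + ln y) + C)).
 { apply Rmult_le_compat; try nra. }
 assert (L4 : ln M <= y * ln M) by nra.
 assert (E : y * (M * s * ln y + (ln M + M * s * ln M + M * C)) = y * ln M + M * y * (s * (ln M + ln y) + C)) by ring.
 lra. Qed.

Lemma inB_tail w w' : in_B w -> irrational w' -> Etail w w' -> in_B w'.
Proof. intros [s [Hs [Hi Hb]]] Hi' Et.
 assert (G1 := bruno_G s w Hi ltac:(lra) Hb).
 assert (G2 := G_transfer w w' Hi Hi' Et G1).
 destruct (G_bruno w' Hi' G2) as [s' [Hs' Hb']]. exists s'; repeat split; auto. Qed.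

Lemma Etail_sym w w' : Etail w w' -> Etail w' w.
Proof. intros [i [j E]]; exists j, i; auto. Qed.

Lemma Etail_trans w1 w2 w3 : Etail w1 w2 -> Etail w2 w3 -> Etail w1 w3.
Proof. intros [i [j E1]] [j' [l E2]]. destruct (le_lt_dec j j') as [h|h].
 - exists (i + (j' - j))%nat, l. rewrite (rem_shift _ _ _ _ E1). replace (j + (j'-j))%nat with j' by lia; auto.
 - exists i, (l + (j - j'))%nat. rewrite E1, <- (rem_shift _ _ _ _ E2). replace (j' + (j-j'))%nat with j by lia; auto. Qed.

Lemma Etail_add w n : Etail w (w + IZR n).
Proof. exists 0%nat, 0%nat. simpl. rewrite frac_shift; auto. Qed.

Lemma Etail_inv01 y : 0 < y < 1 -> Etail y (/ y).
Proof. intros H. exists 1%nat, 0%nat. simpl. rewrite (frac_char y 0) by (simpl; lra).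
 rewrite Rminus_0_r; auto. Qed.

Lemma Etail_opp x : irrational x -> Etail x (- x).
Proof. intros H. destruct (cf_rem_props x 0 H) as [Iy [y0 y1]].
 destruct (cf_rem_props x 1 H) as [Iz [z0 z1]].
 set (y := cf_rem x 0) in *. set (z := cf_rem x 1) in *.
 assert (Hfy : frac_part (- x) = 1 - y).
 { assert (hy : y = x - IZR (Int_part x)) by reflexivity. destruct (Int_bounds x).
   rewrite (frac_char (-x) (- Int_part x - 1)).
   - rewrite minus_IZR, opp_IZR. simpl. lra.
   - rewrite minus_IZR, opp_IZR. simpl. lra. }
 assert (R0 : cf_rem (-x) 0 = 1 - y) by (simpl; auto).
 assert (Ha := cf_a_ge1 x 0 H). set (a := cf_a x 1) in *.
 assert (Hz : z = / y - IZR a) by reflexivity.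
 assert (Hyz : y = / (IZR a + z)). { rewrite Hz. replace (IZR a + (/ y - IZR a)) with (/ y) by ring. rewrite Rinv_inv; auto. }
 assert (Hapos : 1 <= IZR a) by (apply IZR_le; auto).
 destruct (Z.eq_dec a 1) as [Ea|Ea].
 - exists 2%nat, 1%nat.
   change (cf_rem (-x) 1) with (frac_part (/ cf_rem (-x) 0)). rewrite R0.
   change (cf_rem x 2) with (frac_part (/ z)).
   assert (/ (1 - y) = / z + IZR 1).
   { rewrite Hyz, Ea. simpl. field. split; lra. }
   rewrite H0, frac_shift; auto.
 - assert (Ha2 : 2 <= IZR a) by (apply IZR_le; lia).
   set (u := IZR a - 1 + z).
   assert (/ (1 - y) = 1 + / u). { rewrite Hyz. unfold u. field. split; lra. }
   assert (0 < / u < 1). { split. apply Rinv_0_lt_compat; unfold u; lra. rewrite <- Rinv_1; apply Rinv_lt_contravar; unfold u; lra. }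
   assert (R1 : cf_rem (-x) 1 = / u).
   { change (cf_rem (-x) 1) with (frac_part (/ cf_rem (-x) 0)). rewrite R0, H0.
     rewrite (frac_char _ 1) by (simpl; lra). simpl; ring. }
   exists 1%nat, 2%nat.
   change (cf_rem (-x) 2) with (frac_part (/ cf_rem (-x) 1)). rewrite R1, Rinv_inv.
   unfold u. replace (IZR a - 1 + z) with (z + IZR (a - 1)) by (rewrite minus_IZR; simpl; ring).
   rewrite frac_shift. rewrite (frac_char z 0) by (simpl; lra). rewrite Rminus_0_r; reflexivity. Qed.

Lemma Etail_inv_pos x : irrational x -> 0 < x -> Etail x (/ x).
Proof. intros H Hx. destruct (Rlt_le_dec x 1) as [h|h].
 - apply Etail_inv01; lra.
 - assert (x <> 1). { intro E; apply H; exists 1%Z, 1%Z; split; [lia|]; rewrite E; simpl; field. }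
   apply Etail_sym. rewrite <- (Rinv_inv x) at 2. apply Etail_inv01. split.
   + apply Rinv_0_lt_compat; lra.
   + rewrite <- Rinv_1; apply Rinv_lt_contravar; lra. Qed.

Lemma Etail_inv x : irrational x -> Etail x (/ x).
Proof. intros H. assert (hx := irr_neq0 x H). destruct (Rlt_le_dec 0 x) as [h|h].
 - apply Etail_inv_pos; auto.
 - assert (x < 0) by lra.
   apply Etail_trans with (- x). { apply Etail_opp; auto. }
   apply Etail_trans with (/ - x). { apply Etail_inv_pos; [apply irr_opp; auto| lra]. }
   rewrite Rinv_opp. apply Etail_sym. apply Etail_opp. apply irr_inv; auto. Qed.

Lemma inB_irr w : in_B w -> irrational w.
Proof. intros [s [_ [h _]]]; auto. Qed.

Lemma inB_add w n : in_B w -> in_B (w + IZR n).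
Proof. intros H. apply (inB_tail w); [auto| apply irr_add, inB_irr; auto| apply Etail_add]. Qed.

Lemma inB_opp w : in_B w -> in_B (- w).
Proof. intros H. apply (inB_tail w); [auto| apply irr_opp, inB_irr; auto| apply Etail_opp, inB_irr; auto]. Qed.

Lemma inB_inv w : in_B w -> in_B (/ w).
Proof. intros H. apply (inB_tail w); [auto| apply irr_inv, inB_irr; auto| apply Etail_inv, inB_irr; auto]. Qed.

Lemma lin_neq0 w c d : irrational w -> (c <> 0 \/ d <> 0)%Z -> IZR c * w + IZR d <> 0.
Proof. intros H Hcd E. destruct (Z.eq_dec c 0) as [Ec|Ec].
 - subst. destruct Hcd as [h|h]; [lia|]. apply h. apply eq_IZR. simpl in E. lra.
 - apply H. exists (- d)%Z, c. split; auto. rewrite opp_IZR.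
   apply not_0_IZR in Ec. apply (Rmult_eq_reg_l (IZR c)); auto. field_simplify; auto. lra. Qed.

Lemma moeb n : forall a b c d, (Z.abs_nat c <= n)%nat -> (a * d - b * c = 1)%Z ->
  forall w, in_B w -> in_B ((IZR a * w + IZR b) / (IZR c * w + IZR d)).
Proof. induction n as [|n IH]; intros a b c d Hc Hdet w Hw.
 all: destruct (Z.eq_dec c 0) as [Ec|Ec].
 1,3: subst c; assert (Had : (a * d = 1)%Z) by lia;
   destruct (Z.mul_eq_1 _ _ Had) as [Ea|Ea]; subst a;
   [ assert (d = 1%Z) by lia; subst d;
     match goal with |- in_B ?X => replace X with (w + IZR b) by (simpl; field) end;
     apply inB_add; auto
   | assert (d = (-1)%Z) by lia; subst d;
     match goal with |- in_B ?X => replace X with (w + IZR (- b)) by (rewrite ?opp_IZR; simpl; field) end;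
     apply inB_add; auto ].
 - lia.
 - assert (Hi := inB_irr w Hw).
   set (q := (a / c)%Z). set (a' := (a - c * q)%Z). set (b' := (b - q * d)%Z).
   assert (Ha' : (Z.abs_nat a' <= n)%nat).
   { assert (E := Z.div_mod a c Ec). fold q in E.
     destruct (Z_lt_le_dec 0 c) as [hc|hc].
     - assert (h := Z.mod_pos_bound a c hc). unfold a'. lia.
     - assert (h := Z.mod_neg_bound a c ltac:(lia)). unfold a'. lia. }
   assert (Hdet' : ((- c) * b' - (- d) * a' = 1)%Z) by (unfold a', b'; nia).
   assert (Hk := IH (- c)%Z (- d)%Z a' b' Ha' Hdet' w Hw).
   assert (Hg := inB_add _ q (inB_opp _ (inB_inv _ Hk))).
   assert (D1 := lin_neq0 w c d Hi ltac:(lia)).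
   assert (D2 := lin_neq0 w a' b' Hi ltac:(lia)).
   unfold a', b' in D2. rewrite !minus_IZR, !mult_IZR in D2.
   replace ((IZR a * w + IZR b) / (IZR c * w + IZR d)) with
     (- / ((IZR (- c) * w + IZR (- d)) / (IZR a' * w + IZR b')) + IZR q); auto.
   unfold a', b'. rewrite !opp_IZR, !minus_IZR, !mult_IZR. field. repeat split; first [exact D1 | exact D2 | intro E; apply D1; lra]. Qed.

Theorem mainTheorem7 : forall (a b c d : Z), (a * d - b * c)%Z = 1%Z ->
  forall w : R, in_B w ->
  in_B ((IZR a * w + IZR b) / (IZR c * w + IZR d)).
Proof. intros a b c d H w Hw. apply (moeb (Z.abs_nat c) a b c d (le_n _) H w Hw). Qed.
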